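(* Let $n$ be an even integer, $Q=P^{\alpha_2}$, $w^{ss}_{\min}\in W^Q$ the element corresponding to $(\frac n2,n)$, and $\xi\in X(w^{ss}_{\min})^{ss}_T(\mathcal{L}(\frac n2\omega_2))$. Let $X_1,\ldots,X_d$ be the standard monomial basis of $H^0(G_{2,n},\mathcal{L}(\frac n2\omega_2))^T$, with $X_1=\prod_{i=1}^{n/2}p_{i,\frac n2+i}$. Then for every $w\in W^{P^{\alpha_{n/2}}}$ with $w\neq \mathrm{id}$ and $w\ne w_0^{S\setminus\{\alpha_{n/2}\}}$ there exists $i\neq1$ with $X_i(w\xi)\neq0$.
   Context: $G=SL(n,\mathbb{C})$, $T$ the diagonal torus, $B$ the upper triangular Borel subgroup, $W=S_n$ acting on $G/Q$ via permutation matrices. $G_{2,n}=G/Q$ is the Grassmannian of 2-planes in $\mathbb{C}^n$, $X(u)=\overline{BuQ}/Q$ for $u\in W^Q\cong I(2,n)$. $p_{a,b}$ ($a<b$) are the Plücker coordinates, sections of $\mathcal{L}(\omega_2)=\mathcal{O}(1)$, with natural $T$-linearization; $ss$ denotes $T$-semistable points. A standard monomial of degree $\frac n2$ is a product $p_{\tau_1}\cdots p_{\tau_{n/2}}$ with $\tau_1\le\cdots\le\tau_{n/2}$ in $I(2,n)$ (componentwise); the $T$-invariant ones form a basis of $H^0(G_{2,n},\mathcal{L}(\frac n2\omega_2))^T$. $W^{P^{\alpha_{n/2}}}=\{v\in S_n:v(1)<\cdots<v(\frac n2),\ v(\frac n2+1)<\cdots<v(n)\}$ and $w_0^{S\setminus\{\alpha_{n/2}\}}$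 is its longest element, $i\mapsto \frac n2+i$, $\frac n2+i\mapsto i$ ($1\le i\le\frac n2$). ''$X_i(y)\ne0$'' means the section $X_i$ does not vanish at the point $y$. *)

(* Defs.v *)
From HB Require Import structures.
From mathcomp Require Import Rstruct complex.
From mathcomp Require Import all_boot all_order all_algebra all_fingroup.
From Stdlib Require Rdefinitions.

Set Implicit Arguments.
Unset Strict Implicit.
Unset Printing Implicit Defensive.

Import Order.TTheory GRing.Theory Num.Theory.
Local Open Scope ring_scope.

Definition Cplx : closedFieldType := (Rdefinitions.R)[i].

Section Grass.
Variables (F : fieldType) (n : nat).

(* A point of G_{2,n} is the row space of a rank-2 matrix M : 'M_(2,n)
   (rows are vectors of F^n; indices are 0-based: 'I_n = {0,...,n-1}). *)
Definition is_Gpoint (M : 'M[F]_(2, n)) : Prop := \rank M = 2%N.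

Definition pl (M : 'M[F]_(2, n)) (ab : 'I_n * 'I_n) : F :=
  M ord0 ab.1 * M 1 ab.2 - M ord0 ab.2 * M 1 ab.1.

(* A section of L(omega_2)^{d} = O(d): a homogeneous degree-d polynomial in the
   Plücker coordinates, evaluated on representatives.  A general such
   polynomial is  sum_{ts} c_ts prod_i p_{ts_i}. *)
Definition section (d : nat) (c : {ffun d.-tuple ('I_n * 'I_n) -> F})
    (M : 'M[F]_(2, n)) : F :=
  \sum_(ts : d.-tuple ('I_n * 'I_n)) c ts * \prod_(i < d) pl M (tnth ts i).

Definition monomial (d : nat) (ts : d.-tuple ('I_n * 'I_n)) (M : 'M[F]_(2, n)) : F :=
  \prod_(i < d) pl M (tnth ts i).

(* Torus T of SL_n: diagonal matrices diag(t) with prod t_i = 1, acting on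
   F^n (row vectors) by v |-> v * diag(t). *)
Definition T_invariant (s : 'M[F]_(2, n) -> F) : Prop :=
  forall (t : 'rV[F]_n), \prod_(i < n) t ord0 i = 1 ->
  forall M : 'M[F]_(2, n), is_Gpoint M -> s (M *m diag_mx t) = s M.

(* T-semistable points for L(m omega_2): some T-invariant section of some
   positive tensor power L^{k} = O(k*m) does not vanish at the point. *)
Definition T_semistable (m : nat) (M : 'M[F]_(2, n)) : Prop :=
  exists k : nat, (0 < k)%N /\
    exists c : {ffun (k * m)%N.-tuple ('I_n * 'I_n) -> F},
      T_invariant (section c) /\ section c M != 0.

(* Schubert variety X(u) for u = (m, n) (1-based), Q = P^{alpha_2}, B upper
   triangular: X(u) = { V : dim (V cap E_m) >= 1 }, E_m = span(e_1..e_m).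
   (The second condition dim(V cap E_n) >= 2 is automatic.) *)
Definition in_X_wssmin (m : nat) (M : 'M[F]_(2, n)) : Prop :=
  exists v : 'rV[F]_n, [/\ v != 0, (v <= M)%MS &
     forall j : 'I_n, (m <= j)%N -> v ord0 j = 0].

(* Action of a permutation w in W = S_n via permutation matrices:
   w e_i = e_{w(i)}, so on row vectors v |-> v * perm_mx w. *)
Definition act_perm (w : 'S_n) (M : 'M[F]_(2, n)) : 'M[F]_(2, n) :=
  M *m perm_mx w.

End Grass.

Section Combinatorics.
Variable n : nat.

Definition standard (d : nat) (ts : d.-tuple ('I_n * 'I_n)) : Prop :=
  (forall i : 'I_d, ((tnth ts i).1 < (tnth ts i).2)%N) /\
  (forall i j : 'I_d, (i <= j)%N ->
     ((tnth ts i).1 <= (tnth ts j).1)%N /\ ((tnth ts i).2 <= (tnth ts j).2)%N).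

(* The tuple of X_1 = prod_{i=1}^{m} p_{i, m+i} (0-based: (i, m+i), i < m). *)
Definition is_X1 (m : nat) (ts : m.-tuple ('I_n * 'I_n)) : Prop :=
  forall i : 'I_m, nat_of_ord (tnth ts i).1 = nat_of_ord i /\
                   nat_of_ord (tnth ts i).2 = (nat_of_ord i + m)%N.

Definition in_WP (m : nat) (w : 'S_n) : Prop :=
  forall i j : 'I_n, (i < j)%N -> ((i < m)%N = (j < m)%N) -> (w i < w j)%N.

Definition is_w0P (m : nat) (w : 'S_n) : Prop :=
  forall i : 'I_n, nat_of_ord (w i) = (if (i < m)%N then (i + m)%N else (i - m)%N).

End Combinatorics.

(* Main.v *)
Require Import Defs.
From HB Require Import structures.
From mathcomp Require Import Rstruct complex.
From mathcomp Require Import all_boot all_order all_algebra all_fingroup.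
From mathcomp Require Import ring zify.
Set Warnings "-notation-overridden,-ambiguous-paths".
Set Implicit Arguments.
Unset Strict Implicit.
Import Order.TTheory GRing.Theory Num.Theory.
Local Open Scope ring_scope.

Lemma Cplx_natr_eq0 (i : nat) : ((i%:R : Cplx) == 0) = (i == 0)%N.
Proof. exact: (@pnatr_eq0 (Rdefinitions.R)[i]). Qed.
Lemma Cplx_eqr_nat (i j : nat) : ((i%:R : Cplx) == j%:R) = (i == j)%N.
Proof. exact: (@eqr_nat (Rdefinitions.R)[i]). Qed.

Lemma pl_diag (F : fieldType) n (M : 'M[F]_(2,n)) t ab :
  pl (M *m diag_mx t) ab = t 0 ab.1 * t 0 ab.2 * pl M ab.
Proof. by rewrite /pl mul_mx_diag !mxE; ring. Qed.

Definition ecnt n (S : {set 'I_n}) (ab : 'I_n * 'I_n) : nat :=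
  ((ab.1 \in S) + (ab.2 \in S))%N.
Definition cnt n d (S : {set 'I_n}) (ts : d.-tuple ('I_n * 'I_n)) : nat :=
  \sum_(i < d) ecnt S (tnth ts i).

Lemma key_id n d (xi : 'M[Cplx]_(2,n)) (c : {ffun d.-tuple ('I_n * 'I_n) -> Cplx})
  (S : {set 'I_n}) :
  is_Gpoint xi -> T_invariant (section c) ->
  forall nu : Cplx, nu != 0 -> nu ^+ (2 * d * #|S|) * section c xi =
    \sum_ts c ts * monomial ts xi * nu ^+ (n * cnt S ts).
Proof.
move=> Gx Tinv nu nu0.
have sn : (#|S| <= n)%N by rewrite -[X in (_ <= X)%N]card_ord max_card.
set s := #|S| in sn *.
pose q := nu ^+ s; pose r := nu ^+ (n - s).
have q0 : q != 0 by rewrite expf_neq0.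
have qr : nu ^+ n = q * r by rewrite -exprD subnKC.
pose t : 'rV[Cplx]_n := \row_j (if j \in S then r else q^-1).
have pt : \prod_(i<n) t ord0 i = 1.
  rewrite (bigID (mem S)) /=.
  rewrite (eq_bigr (fun _ => r)); last by move=> i iS; rewrite mxE iS.
  rewrite [X in _ * X](eq_bigr (fun _ => q^-1)); last by move=> i iS; rewrite mxE (negbTE iS).
  rewrite !prodr_const.
  have -> : #|[pred i | ~~ (i \in S)]| = (n - s)%N.
    by rewrite -[X in (X - _)%N](card_ord n) -(cardC (mem S)) addKn.
  rewrite /r /q -!exprM exprVn -exprM mulnC divff // expf_neq0 //.
have := Tinv t pt xi Gx; rewrite /section => <-.
rewrite mulr_sumr; apply: eq_bigr => ts _.
rewrite /monomial /cnt big_distrr /= -prodrXr.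
rewrite (_ : (2 * d * s)%N = \sum_(i < d) (2 * s))%N; last first.
  by rewrite sum_nat_const card_ord mulnA [(d * 2)%N]mulnC.
rewrite -prodrXr mulrCA -mulrA -!big_split /=; congr (_ * _).
apply: eq_bigr => i _.
rewrite pl_diag /ecnt !mxE.
have e2 : nu ^+ (2 * s) = q * q by rewrite mulnC exprM expr2.
rewrite e2.
case: ((tnth ts i).1 \in S); case: ((tnth ts i).2 \in S) => /=.
all: rewrite ?addn0 ?add0n ?muln1 ?muln0 ?expr0 ?qr //.
- by rewrite mulnC mul2n -addnn exprD qr; field.
- field; exact: q0.
- field; exact: q0.
- field; exact: q0.
Qed.

Lemma unstable n d (xi : 'M[Cplx]_(2,n)) (c : {ffun d.-tuple ('I_n * 'I_n) -> Cplx})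
  (S : {set 'I_n}) (C : nat) :
  is_Gpoint xi -> T_invariant (section c) ->
  (forall ts : d.-tuple ('I_n * 'I_n), monomial ts xi != 0 -> (cnt S ts <= C)%N) ->
  (n * C < 2 * d * #|S|)%N -> section c xi = 0.
Proof.
move=> Gx Tinv Hc HN.
set N := (2 * d * #|S|)%N in HN.
pose Q : {poly Cplx} := \sum_ts (c ts * monomial ts xi) *: 'X^(n * cnt S ts)
   - (section c xi) *: 'X^N.
have Qr : forall nu : Cplx, nu != 0 -> Q.[nu] = 0.
  move=> nu nu0; rewrite /Q hornerD hornerN horner_sum hornerZ hornerXn.
  under eq_bigr do rewrite hornerZ hornerXn.
  by rewrite -(key_id S Gx Tinv nu0) mulrC subrr.
have Q0 : Q = 0.
  apply: (@roots_geq_poly_eq0 _ Q [seq (i.+1)%:R | i <- iota 0 (size Q)]).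
  - apply/allP => x /mapP [i _ ->]; apply/rootP/Qr; by rewrite Cplx_natr_eq0.
  - rewrite map_inj_uniq ?iota_uniq // => i j /eqP; rewrite Cplx_eqr_nat.
    by move=> /eqP [].
  - by rewrite size_map size_iota.
have := congr1 (fun p : {poly Cplx} => p`_N) Q0.
rewrite /Q coefB coef_sum coefZ coefXn eqxx mulr1 coef0.
rewrite big1 ?sub0r; first by move/eqP; rewrite oppr_eq0 => /eqP.
move=> ts _; rewrite coefZ coefXn.
case: (eqVneq (monomial ts xi) 0) => [->|nz]; first by rewrite mulr0 mul0r.
have le := Hc ts nz.
rewrite (_ : (_ == _) = false) ?mulr0 //.
apply/negbTE; rewrite neq_ltn; apply/orP; right.
exact: leq_ltn_trans (leq_mul (leqnn n) le) HN.
Qed.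

Lemma pl_ker (al be x0a x1a x0b x1b : Cplx) : (al != 0) || (be != 0) ->
  al * x0a + be * x1a = 0 -> al * x0b + be * x1b = 0 ->
  x0a * x1b - x0b * x1a = 0.
Proof.
move=> /orP H Ea Eb.
have h1 : al * (x0a * x1b - x0b * x1a) =
   x1b * (al * x0a + be * x1a) - x1a * (al * x0b + be * x1b) by ring.
have h2 : be * (x0a * x1b - x0b * x1a) =
   x0a * (al * x0b + be * x1b) - x0b * (al * x0a + be * x1a) by ring.
rewrite Ea Eb !mulr0 subr0 in h1 h2.
case: H => nz.
- by move/eqP: h1; rewrite mulf_eq0 (negbTE nz) => /eqP.
- by move/eqP: h2; rewrite mulf_eq0 (negbTE nz) => /eqP.
Qed.

Lemma pl_nz (al be x0l x1l x0h x1h : Cplx) :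
  al * x0h + be * x1h = 0 -> al * x0l + be * x1l != 0 ->
  ~~ ((x0h == 0) && (x1h == 0)) -> x0l * x1h - x0h * x1l != 0.
Proof.
move=> Eh ul nh; apply/eqP => p0.
have h1 : (al * x0l + be * x1l) * x1h =
   al * (x0l * x1h - x0h * x1l) + x1l * (al * x0h + be * x1h) by ring.
have h2 : (al * x0l + be * x1l) * x0h =
   - be * (x0l * x1h - x0h * x1l) + x0l * (al * x0h + be * x1h) by ring.
rewrite p0 Eh !mulr0 addr0 in h1 h2.
move/eqP: h1; rewrite mulf_eq0 (negbTE ul) /= => z1.
move/eqP: h2; rewrite mulf_eq0 (negbTE ul) /= => z0.
by move: nh; rewrite z0 z1.
Qed.

Lemma incr_exact (m a : nat) (f : 'I_m -> nat) :
  (forall i j : 'I_m, (i < j)%N -> (f i < f j)%N) ->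
  (forall i, (a <= f i)%N) -> (forall i, (f i < a + m)%N) ->
  forall i, f i = (a + i)%N.
Proof.
move=> inc lo up.
have c1 : forall p (i : 'I_m), nat_of_ord i = p -> (a + p <= f i)%N.
  elim=> [|p IH] i ei; first by rewrite addn0.
  have pm : (p < m)%N by move: (ltn_ord i); rewrite ei => /ltnW.
  have := IH (Ordinal pm) erefl.
  have := inc (Ordinal pm) i; rewrite /= ei ltnSn => /(_ isT).
  move=> h1 h2; lia.
have c2 : forall q (i : 'I_m), (i + q)%N = m.-1 -> (f i + q < a + m)%N.
  elim=> [|q IH] i ei; first by rewrite addn0.
  have im : (i.+1 < m)%N by move: (ltn_ord i) ei; lia.
  have := IH (Ordinal im); rewrite /= addSnnS => /(_ ei).
  have := inc i (Ordinal im); rewrite /= ltnSn => /(_ isT).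
  move=> h1 h2; lia.
move=> i; have := c1 _ i erefl.
have := c2 (m.-1 - i)%N i.
have im := ltn_ord i.
rewrite subnKC; last by rewrite -ltnS (ltn_predK im).
move/(_ erefl); lia.
Qed.

Lemma pin m (w : 'S_(m+m)) (P Q : 'I_m -> 'I_(m+m)) (k0 : 'I_m) :
  (forall i j, P i != Q j) ->
  (forall i j : 'I_m, (i < j)%N -> (w (P i) < w (P j))%N) ->
  (forall i j : 'I_m, (i < j)%N -> (w (Q i) < w (Q j))%N) ->
  nat_of_ord k0 = 0%N -> nat_of_ord (w (P k0)) = m ->
  (forall i, nat_of_ord (w (P i)) = (m + i)%N) /\
  (forall i, nat_of_ord (w (Q i)) = i).
Proof.
move=> PQ incP incQ e0 ek.
have hP : forall i, nat_of_ord (w (P i)) = (m + i)%N.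
  apply: (incr_exact (f := fun i => nat_of_ord (w (P i)))) => //.
  - move=> i; case: (eqVneq i k0) => [->|ne]; first by rewrite ek.
    apply: (@leq_trans (w (P k0))); first by rewrite ek.
    apply/ltnW/incP; rewrite e0 lt0n; apply: contra ne => /eqP h.
    by apply/eqP/val_inj; rewrite /= h e0.
split=> //.
apply: (incr_exact (a := 0) (f := fun i => nat_of_ord (w (Q i)))) => //.
move=> i /=; rewrite ltnNge; apply/negP => mi.
have rm : (w (Q i) - m < m)%N by move: (ltn_ord (w (Q i))) mi; lia.
have := hP (Ordinal rm); rewrite /= subnKC // => e.
have : w (P (Ordinal rm)) = w (Q i) by apply: val_inj.
by move/perm_inj/eqP; rewrite (negbTE (PQ _ _)).
Qed.

Theorem lemma7p8 (m n : nat) (Hn : n = (m.*2)%N) (Hm : (0 < m)%N)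
  (xi : 'M[Cplx]_(2, n))
  (Hxi : is_Gpoint xi) (HX : in_X_wssmin m xi) (Hss : T_semistable m xi)
  (w : 'S_n) (HwP : in_WP m w) (Hid : w != 1%g) (Hw0 : ~ is_w0P m w) :
  exists ts : m.-tuple ('I_n * 'I_n),
    [/\ standard ts, T_invariant (@monomial Cplx n m ts), ~ is_X1 ts &
        @monomial Cplx n m ts (act_perm w xi) != 0].
Proof.
have Hnm : n = (m + m)%N by rewrite Hn addnn.
clear Hn; subst n.
case: HX => v [v0 /submxP [D vD] vB].
case: Hss => k [k0 [c [Tinv nz]]].
have d0 : (0 < k * m)%N by rewrite muln_gt0 k0 Hm.
set al := D 0 ord0; set be := D 0 1.
have vE : forall j, v 0 j = al * xi ord0 j + be * xi 1 j.
  move=> j; rewrite vD !mxE big_ord_recl big_ord_recl big_ord0 addr0.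
  have e1 : lift ord0 ord0 = 1 :> 'I_2 by apply: val_inj.
  by rewrite e1.
have ab0 : (al != 0) || (be != 0).
  case: (eqVneq al 0) => [a0|//]; case: (eqVneq be 0) => [b0|//] /=.
  suff : v == 0 by rewrite (negbTE v0).
  by apply/eqP/rowP => jj; rewrite vE a0 b0 mxE !mul0r addr0.
have mono_pl : forall d (ts : d.-tuple ('I_(m+m) * 'I_(m+m))) i,
    monomial ts xi != 0 -> pl xi (tnth ts i) != 0.
  move=> d ts i; apply: contra => /eqP h.
  by rewrite /monomial (bigD1 i) //= h mul0r.
have Z : forall j : 'I_(m+m), ~~ ((xi ord0 j == 0) && (xi 1 j == 0)).
  move=> j; apply/negP => /andP [/eqP z0 /eqP z1].
  move/eqP: nz; apply.
  apply: (@unstable _ _ xi c [set j] 0) => //; last first.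
    by rewrite muln0 cards1 muln1 muln_gt0 /= d0.
  move=> ts mz; rewrite leqn0; apply/eqP/big1 => i _.
  have := mono_pl _ ts i mz.
  rewrite /ecnt !inE /pl.
  case: (eqVneq (tnth ts i).1 j) => [->|_].
    by rewrite z0 z1 !mul0r mulr0 subrr eqxx.
  case: (eqVneq (tnth ts i).2 j) => [->|_] //.
  by rewrite z0 z1 !mul0r mulr0 subrr eqxx.
have L : forall j : 'I_(m+m), (j < m)%N -> v 0 j != 0.
  move=> j jm; apply/negP => /eqP vj.
  pose S := j |: [set rshift m i | i : 'I_m].
  have inS : forall a, a \in S -> v 0 a = 0.
    move=> a; rewrite !inE => /orP [/eqP -> //|/imsetP [i _ ->]].
    by apply: vB; rewrite /= leq_addr.
  have cS : #|S| = m.+1.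
    have nj : j \notin [set rshift m i | i : 'I_m].
      apply/negP => /imsetP [i _ ej].
      by move: jm; rewrite ej /= ltnNge leq_addr.
    rewrite cardsU1 nj card_imset; last exact: rshift_inj.
    by rewrite cardT size_enum_ord.
  move/eqP: nz; apply.
  apply: (@unstable _ _ xi c S (k * m)) => //; last first.
    rewrite cS; move: d0; set d := (k * m)%N; lia.
  move=> ts mz; rewrite /cnt.
  apply: leq_trans (_ : (\sum_(i < k * m) 1 <= _)%N); last first.
    by rewrite sum_nat_const card_ord muln1.
  apply: leq_sum => i _.
  have := mono_pl _ ts i mz.
  rewrite /ecnt; case A1: (_ \in S); case A2: (_ \in S) => //.
  move=> h; exfalso; move: h; apply/negP; rewrite negbK /pl; apply/eqP.
  apply: (pl_ker ab0); rewrite -vE; exact: inS.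
pose x := fun q : 'I_m => w (lshift m q).
pose y := fun q : 'I_m => w (rshift m q).
have LR : forall i j : 'I_m, lshift m i != rshift m j.
  move=> i j; rewrite -val_eqE /= neq_ltn.
  by rewrite (leq_trans (ltn_ord i) (leq_addr _ _)).
have RL : forall i j : 'I_m, rshift m i != lshift m j.
  by move=> i j; rewrite eq_sym LR.
have incL : forall i j : 'I_m, (i < j)%N -> (x i < x j)%N.
  move=> i j ij; apply: HwP => //=; by rewrite !ltn_ord.
have incR : forall i j : 'I_m, (i < j)%N -> (y i < y j)%N.
  move=> i j ij; apply: HwP => /=; first by rewrite ltn_add2l.
  by rewrite !ltnNge !leq_addr.
have xy : forall q, nat_of_ord (x q) != nat_of_ord (y q).
  move=> q; rewrite val_eqE; apply/eqP => /perm_inj /eqP.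
  by rewrite (negbTE (LR _ _)).
pose pr := fun q : 'I_m =>
  if (x q < y q)%N then (x q, y q) else (y q, x q).
exists [tuple pr q | q < m]; split.
- split.
  + move=> i; rewrite tnth_mktuple /pr; have := xy i.
    case: ifP => /= h; lia.
  + move=> i j ij; rewrite !tnth_mktuple /pr.
    have [hx hy] : (x i <= x j)%N /\ (y i <= y j)%N.
      move: ij; rewrite leq_eqVlt => /orP [/eqP/val_inj -> //| lt].
      by split; apply/ltnW; [apply: incL | apply: incR].
    have := xy i; have := xy j.
    by case: ifP => /= h1; case: ifP => /= h2 e1 e2; split; lia.
- move=> t pt M GM; rewrite /monomial.
  under eq_bigr => i _ do rewrite pl_diag.
  rewrite big_split /=.
  rewrite [X in X * _](_ : _ = 1) ?mul1r //.
  rewrite -[RHS]pt.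
  transitivity (\prod_(i < m) (t 0 (x i) * t 0 (y i))).
    apply: eq_bigr => i _; rewrite tnth_mktuple /pr.
    by case: ifP => //= _; rewrite mulrC.
  transitivity (\prod_(i < m + m) t 0 (w i)).
    by rewrite big_split_ord /= big_split.
  by rewrite [RHS](reindex_inj (@perm_inj _ w)).
- move=> H; have [e1 e2] := H (Ordinal Hm).
  rewrite tnth_mktuple /pr in e1 e2.
  case: ifP e1 e2 => /= _ e1 e2.
  + have [hR hL] := @pin m w (@rshift m m) (lshift m) (Ordinal Hm) RL incR incL
      erefl e2.
    move/eqP: Hid; apply; apply/permP => i; rewrite perm1; apply: ord_inj.
    case: (splitP i) => [j ej|j ej].
      have ei : i = lshift m j by apply: ord_inj; rewrite ej.
      by rewrite ei hL.
    have ei : i = rshift m j by apply: ord_inj; rewrite ej.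
    by rewrite ei hR.
  + have [hL hR] := @pin m w (lshift m) (@rshift m m) (Ordinal Hm) LR incL incR
      erefl e2.
    apply: Hw0 => i.
    case: (splitP i) => [j ej|j ej].
      have ei : i = lshift m j by apply: ord_inj; rewrite ej.
      by rewrite ei hL /= addnC.
    have ei : i = rshift m j by apply: ord_inj; rewrite ej.
    by rewrite ei hR /= addKn.
- rewrite /monomial; apply/prodf_neq0 => i _.
  rewrite tnth_mktuple /pr /act_perm.
  have E : forall r c0, (xi *m perm_mx w) r c0 = xi r ((w^-1)%g c0).
    by move=> r c0; rewrite -[w]invgK -col_permE /col_perm mxE invgK.
  have key : pl (xi *m perm_mx w) (x i, y i) != 0.
    rewrite /pl /= !E /x /y !permK.
    apply: (pl_nz (al := al) (be := be)).
    - by rewrite -vE; apply: vB; rewrite /= leq_addr.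
    - by rewrite -vE; apply: L; rewrite /= ltn_ord.
    - exact: Z.
  case: ifP => // _; move: key; rewrite /pl /=.
  by apply: contra => /eqP h; rewrite -oppr_eq0 opprB h.
Qed.
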